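(* Let $\Bbbk$ be a field, $S=\Bbbk[x,y,z]$, $\mathfrak m=(x,y,z)$, and let $I\subseteq S$ be a monomial ideal generated in degree $d$. Then $I$ has a bad configuration in $\Delta(d)$ if and only if the socle $0:_{S/I}\mathfrak m$ of $S/I$ contains (the image of) a monomial of degree at least $d$.
   Context: For a monomial $f\in S$, its $d$-shadow is the set of all monomials of degree $d$ dividing $f$. Let $\mathcal G(I)$ denote the minimal monomial generating set of $I$. $I$ (generated in degree $d$) is said to have a bad configuration in $\Delta(d)$ if there exists a nonempty set $M$ of degree-$d$ monomials not belonging to $I$ such that (i) $M$ is the $d$-shadow of some monomial $f\in S$, and (ii) each of the $d$-shadows of $fx$, $fy$ and $fz$ has nonempty intersection with $\mathcal G(I)$. Here $\Delta(d)$ denotes the dual graph of $\mathfrak m^d$ (vertices: degree-$d$ monomials). *)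

(* Defs.v *)
From mathcomp Require Import all_boot all_order all_algebra.
From mathcomp Require Import mpoly.
Set Implicit Arguments. Unset Strict Implicit. Unset Printing Implicit Defensive.
Import GRing.Theory.
Local Open Scope ring_scope.

(* Monomials of S = k[x,y,z] are exponent vectors m : 'X_{1..3};
   the variables x, y, z are 'X_0, 'X_1, 'X_2 (monomials mnm1 0, mnm1 1, mnm1 2). *)

Definition mono_ideal (k : fieldType) (G : seq 'X_{1..3}) (p : {mpoly k[3]}) : Prop :=
  exists hs : seq {mpoly k[3]},
    p = \sum_(i < size G) hs`_i * 'X_[nth (@mnm0 3) G i].

(* The homogeneous maximal ideal m = (x,y,z): polynomials with zero constant term. *)
Arguments mono_ideal : clear implicits.

Definition max_ideal (k : fieldType) (p : {mpoly k[3]}) : Prop := p@_(@mnm0 3) = 0.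

Definition in_socle (k : fieldType) (I : {mpoly k[3]} -> Prop) (f : {mpoly k[3]}) : Prop :=
  forall g, max_ideal g -> I (g * f).

Definition mdvd (u v : 'X_{1..3}) : bool := lem u v.

Definition min_gens (k : fieldType) (I : {mpoly k[3]} -> Prop) (u : 'X_{1..3}) : Prop :=
  I 'X_[u] /\ forall v : 'X_{1..3}, mdvd v u -> v <> u -> ~ I 'X_[v].

Definition shadow (d : nat) (f m : 'X_{1..3}) : Prop := mdeg m = d /\ mdvd m f.

Definition bad_configuration (k : fieldType) (I : {mpoly k[3]} -> Prop) (d : nat) : Prop :=
  exists M : 'X_{1..3} -> Prop,
    (exists m, M m) /\
    (forall m, M m -> mdeg m = d /\ ~ I 'X_[m]) /\
    exists f : 'X_{1..3},
      (forall m, M m <-> shadow d f m) /\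
      (forall i : 'I_3, exists g, shadow d (mnm_add f (mnm1 i)) g /\ min_gens I g).

(* Main.v *)
Require Import Defs.
From mathcomp Require Import all_boot all_order all_algebra.
From mathcomp Require Import mpoly.
Import GRing.Theory.
Local Open Scope ring_scope.

Section S.
Variable k : fieldType.
Variable G : seq 'X_{1..3}.
Local Notation I := (mono_ideal k G).

Lemma coefMX0 (p : {mpoly k[3]}) (g m : 'X_{1..3}) :
  ~~ (g <= m)%MM -> (p * 'X_[g])@_m = 0.
Proof.
move=> Hn; apply/eqP; rewrite mcoeff_eq0; apply/negP.
rewrite (perm_mem (msuppMX p g)) => /mapP [m' _ Hm]; move: Hn; rewrite Hm.
by rewrite lem_addr.
Qed.

Lemma L2 m : I 'X_[m] -> has (fun g => mdvd g m) G.
Proof.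
move=> [hs Hs]; apply/negPn/negP => /hasPn Hn.
have : 'X_[m]@_m = 0 :> k.
  rewrite Hs raddf_sum big1 // => i _; apply: coefMX0.
  by apply: Hn; apply: mem_nth.
by rewrite mcoeffX eqxx => /eqP; rewrite oner_eq0.
Qed.

Lemma I0 : I 0.
Proof. by exists [::]; rewrite big1 // => i _; rewrite nth_nil mul0r. Qed.

Lemma ID p q : I p -> I q -> I (p + q).
Proof.
move=> [h1 ->] [h2 ->]; exists (mkseq (fun i => h1`_i + h2`_i) (size G)).
rewrite -big_split /=; apply: eq_bigr => i _.
by rewrite nth_mkseq // mulrDl.
Qed.

Lemma L3 (q : {mpoly k[3]}) m : has (fun g => mdvd g m) G -> I (q * 'X_[m]).
Proof.
move=> /hasP [g gG Hg].
have jlt : (index g G < size G)%N by rewrite index_mem.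
exists (rcons (nseq (index g G) 0) (q * 'X_[m - g])).
rewrite (bigD1 (Ordinal jlt)) //= big1 ?addr0.
  rewrite nth_rcons size_nseq ltnn eqxx nth_index // -mulrA -mpolyXD.
  by rewrite submK.
move=> i /eqP Hi; rewrite nth_rcons size_nseq.
case: ltnP => H; first by rewrite nth_nseq H mul0r.
case: eqP => H2; last by rewrite mul0r.
by exfalso; apply: Hi; apply: val_inj.
Qed.

Lemma socleB u : (forall i : 'I_3, has (fun g => mdvd g (u + U_(i))%MM) G) ->
  in_socle I 'X_[u].
Proof.
move=> Hi g Hg; rewrite (mpolyE g) big_distrl big_seq /=.
apply: (big_ind (fun p => I p)); [exact: I0 | exact: ID |].
move=> m Hm.
rewrite -mul_mpolyC -mulrA -mpolyXD; apply: L3.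
have : m != 0%MM.
  apply/eqP => E; move: Hm; rewrite mcoeff_msupp E.
  by move: Hg; rewrite /max_ideal => ->; rewrite eqxx.
rewrite -mdeg_eq0 mdegE => Hn.
have [i Hmi] : exists i : 'I_3, (0 < m i)%N.
  case: (pickP (fun i : 'I_3 => 0 < m i)%N) => [i Hmi | H]; first by exists i.
  move: Hn; rewrite big1 // => i _; apply/eqP; rewrite -leqn0 leqNgt H //.
move: (Hi i) => /hasP [g' g'G Hg']; apply/hasP; exists g' => //.
apply/mnm_lepP => j; move: Hg' => /mnm_lepP /(_ j).
rewrite !mnmDE mnm1E => H; apply: (leq_trans H).
rewrite addnC leq_add2r; case: eqP => [<-|] //.
Qed.

Lemma lemR (m : 'X_{1..3}) : mdvd m m.
Proof. by apply/mnm_lepP. Qed.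

Lemma lemT (a b c : 'X_{1..3}) : mdvd a b -> mdvd b c -> mdvd a c.
Proof.
move=> /mnm_lepP H1 /mnm_lepP H2; apply/mnm_lepP => i; exact: leq_trans (H1 i) (H2 i).
Qed.

Lemma lem_deg (a b : 'X_{1..3}) : mdvd a b -> (mdeg a <= mdeg b)%N.
Proof. by move=> H; apply: lemc_mdeg; apply: lem_leo. Qed.

Lemma ltm_deg (a b : 'X_{1..3}) : mdvd a b -> a <> b -> (mdeg a < mdeg b)%N.
Proof.
move=> H Hn; rewrite -(submK H) mdegD -{1}(add0n (mdeg a)) ltn_add2r lt0n mdeg_eq0.
apply/eqP => E; apply: Hn; by rewrite -(submK H) E add0m.
Qed.

Lemma exdiv (d : nat) (u : 'X_{1..3}) : (d <= mdeg u)%N ->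
  exists m, mdeg m = d /\ mdvd m u.
Proof.
elim: d => [|d IH] H.
  by exists 0%MM; split; [exact: mdeg0 | apply/mnm_lepP => i; rewrite mnm0E].
have [m [Hm Hd]] := IH (ltnW H).
case: (pickP (fun i : 'I_3 => m i < u i)%N) => [i Hi | Hn].
  exists (m + U_(i))%MM; split; first by rewrite mdegD mdeg1 Hm addn1.
  apply/mnm_lepP => j; rewrite mnmDE mnm1E; case: eqP => [<-|_].
    by rewrite addn1.
  by rewrite addn0; move/mnm_lepP: Hd.
exfalso.
have E : m = u.
  apply/mnmP => j; apply/eqP; rewrite eqn_leq; move/mnm_lepP: Hd => ->.
  by rewrite leqNgt Hn.
by move: H; rewrite -E Hm ltnn.
Qed.
End S.

Theorem mainTheorem3 (k : fieldType) (d : nat) (G : seq 'X_{1..3}) :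
  all (fun g => mdeg g == d) G ->
  (bad_configuration (mono_ideal k G) d <->
   exists u : 'X_{1..3},
     (d <= mdeg u)%N /\ ~ mono_ideal k G 'X_[u] /\ in_socle (mono_ideal k G) 'X_[u]).
Proof.
move=> /allP HG.
have degG : forall g, g \in G -> mdeg g = d by move=> g /HG /eqP.
split.
  move=> [M [[m0 Hm0] [HM [f [Hsh Hi]]]]].
  exists f; split; [|split].
  - have [<- Hd] := (proj1 (Hsh m0) Hm0); exact: lem_deg.
  - move=> /L2 /hasP [g gG Hg].
    have : M g by apply/Hsh; split; [exact: degG | done].
    move=> /HM [_]; apply; rewrite -[X in _ X]mul1r; apply: L3.
    by apply/hasP; exists g => //; apply: lemR.
  - apply: socleB => i; have [g [[_ Hg1] [Hg2 _]]] := Hi i.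
    have /hasP [h hG Hh] := @L2 k G _ Hg2.
    by apply/hasP; exists h => //; apply: lemT Hg1.
move=> [u [Hd [Hn Hs]]].
exists (shadow d u); split; [|split].
- by have [m Hm] := exdiv _ _ Hd; exists m.
- move=> m [Hm Hdv]; split => // /L2 /hasP [g gG Hg]; apply: Hn.
  rewrite -[X in _ X]mul1r; apply: L3; apply/hasP; exists g => //; exact: lemT Hdv.
exists u; split => // i.
have : mono_ideal k G ('X_[U_(i)] * 'X_[u]).
  apply: Hs; rewrite /max_ideal mcoeffX; case: eqP => // E.
  by move: (mdeg1 i); rewrite E mdeg0.
rewrite -mpolyXD => /L2 /hasP [h hG Hh].
exists h; split; first by split; [exact: degG | rewrite addmC].
split.
  rewrite -[X in _ X]mul1r; apply: L3; apply/hasP; exists h => //; exact: lemR.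
move=> v Hv Hne /L2 /hasP [h' h'G Hh'].
have := ltm_deg _ _ Hv Hne; have := lem_deg _ _ Hh'.
by rewrite (degG _ hG) (degG _ h'G) => H1 H2; move: (leq_ltn_trans H1 H2); rewrite ltnn.
Qed.
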